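(* Let $\eta\in(0,1)$. Let $\mathbf{w}_0$ be such that $\xi_{01}\neq0$, and suppose that for each $t\ge0$ the vector $\mathbf{w}_{t+1}$ approximately minimizes $f_{t+1}$ so accurately that $\epsilon_t:=\frac{f_{t+1}(\mathbf{w}_{t+1})-f_{t+1}^*}{\mathbf{w}_t^\top\widehat{\mathbf{B}}\mathbf{w}_t}\le\min\Big(\sum_{i=2}^d\xi_{ti}^2/\beta_i,\ \xi_{t1}^2/\beta_1\Big)\cdot\frac{(\beta_1-\beta_2)^2}{32}.$ Let $T=\lceil\log_{7/5}(G(\mathbf{r}_0)/\eta)\rceil$. Then $|\sin\theta_t|\le G(\mathbf{r}_t)\le\eta$ for all $t\ge T$.
   Context: Given samples $(\mathbf{x}_i,\mathbf{y}_i)_{i=1}^N$ in $\mathbb{R}^{d_x}\times\mathbb{R}^{d_y}$, $d=d_x+d_y$, let $\widehat{\Sigma}_{xx}=\frac1N\sum\mathbf{x}_i\mathbf{x}_i^\top$, $\widehat{\Sigma}_{yy}=\frac1N\sum\mathbf{y}_i\mathbf{y}_i^\top$ (assumed positive definite), $\widehat{\Sigma}_{xy}=\frac1N\sum\mathbf{x}_i\mathbf{y}_i^\top$, $\widehat{\mathbf{T}}=\widehat{\Sigma}_{xx}^{-1/2}\widehat{\Sigma}_{xy}\widehat{\Sigma}_{yy}^{-1/2}$ with singular values $\widehat\rho_1\ge\widehat\rho_2\ge\cdots$ and gap $\widehat\Delta=\widehat\rho_1-\widehat\rho_2>0$, top unit singular pair $(\widehat{\mathbf{a}}_1,\widehat{\mathbf{b}}_1)$,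 $\widehat{\mathbf{u}}=\widehat{\Sigma}_{xx}^{-1/2}\widehat{\mathbf{a}}_1$, $\widehat{\mathbf{v}}=\widehat{\Sigma}_{yy}^{-1/2}\widehat{\mathbf{b}}_1$. Let $\lambda$ satisfy $\lambda-\widehat\rho_1\in[l\widehat\Delta,u\widehat\Delta]$ with $0<l<u<1$. Define $\widehat{\mathbf{C}}=\begin{bmatrix}\mathbf{0}&\widehat{\mathbf{T}}\\ \widehat{\mathbf{T}}^\top&\mathbf{0}\end{bmatrix}$, $\widehat{\mathbf{M}}_\lambda=(\lambda\mathbf{I}-\widehat{\mathbf{C}})^{-1}$, $\widehat{\mathbf{A}}_\lambda=\begin{bmatrix}\lambda\widehat{\Sigma}_{xx}&-\widehat{\Sigma}_{xy}\\-\widehat{\Sigma}_{xy}^\top&\lambda\widehat{\Sigma}_{yy}\end{bmatrix}$, $\widehat{\mathbf{B}}=\mathrm{diag}(\widehat{\Sigma}_{xx},\widehat{\Sigma}_{yy})$, so that $\widehat{\mathbf{M}}_\lambda=\widehat{\mathbf{B}}^{1/2}\widehat{\mathbf{A}}_\lambda^{-1}\widehat{\mathbf{B}}^{1/2}$. Let $\beta_1\ge\beta_2\ge\cdots\ge\beta_d>0$ be the eigenvalues of $\widehat{\mathbf{M}}_\lambda$ with orthonormal eigenvectors $\mathbf{p}_1,\dots,\mathbf{p}_d$, where $\mathbf{p}_1=\widehat{\mathbf{r}}:=\frac1{\sqrt2}[\widehat{\Sigma}_{xx}^{1/2}\widehat{\mathbf{u}};\widehat{\Sigma}_{yy}^{1/2}\widehat{\mathbf{v}}]$.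 For iterates $\mathbf{w}_t\in\mathbb{R}^d$ set $\mathbf{r}_t=\widehat{\mathbf{B}}^{1/2}\mathbf{w}_t$, $\xi_{ti}=\mathbf{r}_t^\top\mathbf{p}_i/\|\mathbf{r}_t\|$, $\theta_t$ the angle between $\mathbf{r}_t$ and $\widehat{\mathbf{r}}$, and $G(\mathbf{r}_t)=\sqrt{\sum_{i=2}^d\xi_{ti}^2/\beta_i}\big/\sqrt{\xi_{t1}^2/\beta_1}$. The least squares objective is $f_{t+1}(\mathbf{w})=\frac12\mathbf{w}^\top\widehat{\mathbf{A}}_\lambda\mathbf{w}-\mathbf{w}^\top\widehat{\mathbf{B}}\mathbf{w}_t$, with minimizer $\widehat{\mathbf{A}}_\lambda^{-1}\widehat{\mathbf{B}}\mathbf{w}_t$ and minimum value $f_{t+1}^*$. *)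

(* Defs.v *)
From HB Require Import structures.
From mathcomp Require Import all_boot all_order all_algebra.
From mathcomp Require Import all_classical all_reals all_analysis.
Set Implicit Arguments. Unset Strict Implicit. Unset Printing Implicit Defensive.
Import Order.TTheory GRing.Theory Num.Theory.
Local Open Scope ring_scope.

Section CCA.
Variable R : realType.

Definition posdef n (A : 'M[R]_n) : Prop :=
  A^T = A /\ forall v : 'cV[R]_n, v != 0 -> 0 < (v^T *m A *m v) 0 0.

Definition is_sqrtmx n (A S : 'M[R]_n) : Prop := posdef S /\ S *m S = A.

Definition orthogonalmx n (U : 'M[R]_n) : Prop := U^T *m U = 1%:M.

Definition vdot n (u v : 'cV[R]_n) : R := (u^T *m v) 0 0.
Definition vnorm n (u : 'cV[R]_n) : R := Num.sqrt (vdot u u).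

Definition covmx N m k (a : 'I_N -> 'cV[R]_m) (b : 'I_N -> 'cV[R]_k)
  : 'M[R]_(m, k) := N%:R^-1 *: \sum_(i < N) (a i *m (b i)^T).

Definition rdiagmx m k (sigma : nat -> R) : 'M[R]_(m, k) :=
  \matrix_(i < m, j < k) (if (i : nat) == (j : nat) then sigma i else 0).

(* SVD  T = U D V^T, U,V orthogonal, singular values sigma nonincreasing,
   nonnegative; sigma k = 0 for k >= min(m,k) (padding convention) *)
Definition is_svd m k (T : 'M[R]_(m, k)) (U : 'M[R]_m) (V : 'M[R]_k)
  (sigma : nat -> R) : Prop :=
  orthogonalmx U /\ orthogonalmx V /\
      T = U *m rdiagmx m k sigma *m V^T /\
      (forall i j, (i <= j)%N -> sigma j <= sigma i) /\
      (forall i, 0 <= sigma i) /\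
      (forall i, (minn m k <= i)%N -> sigma i = 0).

Definition angle n (u v : 'cV[R]_n) : R :=
  acos (vdot u v / (vnorm u * vnorm v)).

Definition xi n (P : 'M[R]_n) (r : 'cV[R]_n) (i : 'I_n) : R :=
  vdot r (col i P) / vnorm r.

(* G(r); beta indexed from 0 (paper index i <-> our index i-1) *)
Definition Gfun n (P : 'M[R]_n) (beta : nat -> R) (r : 'cV[R]_n) : R :=
  Num.sqrt (\sum_(i < n | (0 < (i : nat))%N) xi P r i ^+ 2 / beta i)
  / Num.sqrt (\sum_(i < n | (i : nat) == 0%N) xi P r i ^+ 2 / beta i).

Definition lsq n (A B : 'M[R]_n) (wt w : 'cV[R]_n) : R :=
  2^-1 * (w^T *m A *m w) 0 0 - (w^T *m B *m wt) 0 0.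

End CCA.

(* Main.v *)
Require Import Defs.
From HB Require Import structures.
From mathcomp Require Import all_boot all_order all_algebra.
From mathcomp Require Import all_classical all_reals all_analysis.
Import Order.TTheory GRing.Theory Num.Theory.
Local Open Scope ring_scope.
From mathcomp Require Import ring lra.
Section H.
Context {R : realType}.

Lemma cs_ineq (I : finType) (P : pred I) (w u v : I -> R) :
  (forall i, 0 <= w i) ->
  (\sum_(i | P i) w i * u i * v i) ^+ 2 <=
  (\sum_(i | P i) w i * u i ^+ 2) * (\sum_(i | P i) w i * v i ^+ 2).
Proof.
move=> w0.
set X := \sum_(i | P i) _ * u i ^+ 2; set Y := \sum_(i | P i) _ * v i ^+ 2.
set Z := \sum_(i | P i) _.
have Y0 : 0 <= Y by apply: sumr_ge0 => i _; apply: mulr_ge0 => //; apply: sqr_ge0.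
have X0 : 0 <= X by apply: sumr_ge0 => i _; apply: mulr_ge0 => //; apply: sqr_ge0.
have [Ye|Yp] := eqVneq Y 0.
  have Z0 : Z = 0.
    apply: big1 => i Pi.
    have := psumr_eq0P (fun i _ => mulr_ge0 (w0 i) (sqr_ge0 (v i))) Ye Pi.
    move/eqP; rewrite mulf_eq0 sqrf_eq0 => /orP [] /eqP ->; rewrite ?mul0r ?mulr0 //.
  by rewrite Z0 Ye expr0n /= mulr0.
have Ypos : 0 < Y by rewrite lt_def Yp Y0.
pose t := Z / Y.
have H : 0 <= \sum_(i | P i) w i * (u i - t * v i) ^+ 2.
  by apply: sumr_ge0 => i _; apply: mulr_ge0 => //; apply: sqr_ge0.
have E : \sum_(i | P i) w i * (u i - t * v i) ^+ 2 = X - 2 * t * Z + t ^+ 2 * Y.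
  rewrite /X /Y /Z !mulr_sumr -sumrB -big_split /=.
  by apply: eq_bigr => i _; ring.
rewrite E /t in H.
have HH : 0 <= X * Y - Z ^+ 2.
  have -> : X * Y - Z ^+ 2 = Y * (X - 2 * (Z / Y) * Z + (Z / Y) ^+ 2 * Y).
    by field; rewrite Yp.
  by apply: mulr_ge0.
lra.
Qed.

Lemma mink_ineq (I : finType) (P : pred I) (w u v : I -> R) :
  (forall i, 0 <= w i) ->
  Num.sqrt (\sum_(i | P i) w i * (u i + v i) ^+ 2) <=
  Num.sqrt (\sum_(i | P i) w i * u i ^+ 2) + Num.sqrt (\sum_(i | P i) w i * v i ^+ 2).
Proof.
move=> w0.
set X := \sum_(i | P i) _ * u i ^+ 2; set Y := \sum_(i | P i) _ * v i ^+ 2.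
have Y0 : 0 <= Y by apply: sumr_ge0 => i _; apply: mulr_ge0 => //; apply: sqr_ge0.
have X0 : 0 <= X by apply: sumr_ge0 => i _; apply: mulr_ge0 => //; apply: sqr_ge0.
set Z := \sum_(i | P i) w i * u i * v i.
have E : \sum_(i | P i) w i * (u i + v i) ^+ 2 = X + 2 * Z + Y.
  rewrite /X /Y /Z !mulr_sumr -!big_split /=.
  by apply: eq_bigr => i _; ring.
have CS := @cs_ineq _ P w u v w0; rewrite -/X -/Y -/Z in CS.
have ZL : Z <= Num.sqrt X * Num.sqrt Y.
  rewrite -sqrtrM // (le_trans (ler_norm Z)) // -sqrtr_sqr.
  by rewrite ler_sqrt // mulr_ge0.
rewrite E -(ger0_norm (addr_ge0 (sqrtr_ge0 X) (sqrtr_ge0 Y))) -sqrtr_sqr.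
rewrite ler_sqrt ?sqr_ge0 //.
have e : (Num.sqrt X + Num.sqrt Y) ^+ 2 = X + 2 * (Num.sqrt X * Num.sqrt Y) + Y.
  by rewrite sqrrD sqr_sqrtr // sqr_sqrtr // mulr2n; ring.
rewrite e; lra.
Qed.

End H.

Section H2.
Context {R : realType}.

Lemma sum_sub_le (I : finType) (P : pred I) (F : I -> R) :
  (forall i, 0 <= F i) -> \sum_(i | P i) F i <= \sum_i F i.
Proof.
move=> F0; rewrite [X in _ <= X](bigID P) /= lerDl.
by apply: sumr_ge0.
Qed.

Lemma sum_split0 d (o : 'I_d) (F : 'I_d -> R) : (o : nat) = 0%N ->
  \sum_i F i = F o + \sum_(i < d | (0 < (i : nat))%N) F i.
Proof.
move=> ho; rewrite (bigD1 o) //=; congr (_ + _); apply: eq_bigl => i.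
by rewrite -val_eqE /= ho lt0n.
Qed.

Lemma sum_eq0 d (o : 'I_d) (F : 'I_d -> R) : (o : nat) = 0%N ->
  \sum_(i < d | (i : nat) == 0%N) F i = F o.
Proof.
move=> ho; apply: big_pred1 => i /=.
by rewrite -ho; apply/idP/idP => [/eqP h|/eqP ->//]; apply/eqP/val_inj.
Qed.

Definition Gz {d} (b z : 'I_d -> R) :=
  Num.sqrt (\sum_(i < d | (0 < (i : nat))%N) z i ^+ 2 / b i)
  / Num.sqrt (\sum_(i < d | (i : nat) == 0%N) z i ^+ 2 / b i).

Lemma core d (o : 'I_d) (b : 'I_d -> R) (b1 : R) (z c : 'I_d -> R) :
  (o : nat) = 0%N ->
  (forall i, 0 < b i) -> (forall i : 'I_d, (0 < (i : nat))%N -> b i <= b1) ->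
  0 <= b1 -> 2 * b1 <= b o -> z o != 0 ->
  \sum_i c i ^+ 2 / b i <=
    2 * (Num.min (\sum_(i < d | (0 < (i : nat))%N) z i ^+ 2 / b i) (z o ^+ 2 / b o)
        * ((b o - b1) ^+ 2 / 32)) ->
  (b o * z o + c o != 0) /\
  Gz b (fun i => b i * z i + c i) <= 5 / 7 * Gz b z.
Proof.
move=> ho bp bb1 b10 b1o zo Hc.
rewrite /Gz !(sum_eq0 _ _ _ ho).
set S := \sum_(i | _) z i ^+ 2 / b i.
set W := z o ^+ 2 / b o.
set Sc := \sum_i c i ^+ 2 / b i.
have bo := bp o.
have S0 : 0 <= S by apply: sumr_ge0 => i _; apply: divr_ge0 => //; [apply: sqr_ge0|apply: ltW].
have Wp : 0 < W by apply: divr_gt0 => //; rewrite exprn_even_gt0.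
set mm := Num.min S W.
have mm0 : 0 <= mm by rewrite le_min S0 ltW.
pose e := (b o - b1) / 4.
have e0 : 0 <= e by rewrite /e; apply: divr_ge0 => //; lra.
have HSc : Sc <= mm * e ^+ 2 by rewrite /e; move: Hc; rewrite -/Sc -/mm; lra.
have sSc : Num.sqrt Sc <= Num.sqrt mm * e.
  rewrite -(ger0_norm e0) -sqrtr_sqr -sqrtrM // ler_sqrt //.
  by apply: mulr_ge0 => //; apply: sqr_ge0.
have smmS : Num.sqrt mm <= Num.sqrt S by rewrite ler_sqrt // /mm; case: (leP S W) => h; lra.
have smmW : Num.sqrt mm <= Num.sqrt W.
  rewrite ler_sqrt; last exact: ltW.
  rewrite /mm; case: (leP S W) => h; lra.
have c0 : forall i, 0 <= c i ^+ 2 / b i.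
  by move=> i; apply: divr_ge0; [apply: sqr_ge0|apply: ltW].
have sq1 : forall v, Num.sqrt (v ^+ 2 / b o) = `|v| / Num.sqrt (b o).
  move=> v; rewrite sqrtrM ?sqr_ge0 // sqrtr_sqr sqrtrV //; exact: ltW.
have sbo : 0 < Num.sqrt (b o) by rewrite sqrtr_gt0.
have sWe : Num.sqrt W = `|z o| / Num.sqrt (b o) by rewrite /W sq1.
have co : Num.sqrt (c o ^+ 2 / b o) <= Num.sqrt Sc.
  rewrite ler_sqrt; last by apply: sumr_ge0.
  by rewrite /Sc (bigD1 o) //= lerDl; apply: sumr_ge0.
have Den : (b o - e) * Num.sqrt W <= Num.sqrt ((b o * z o + c o) ^+ 2 / b o).
  rewrite [X in _ <= X]sq1.
  have h1 : b o * `|z o| - `|c o| <= `|b o * z o + c o|.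
    have := lerB_dist (b o * z o) (- c o).
    by rewrite normrN normrM (gtr0_norm bo) opprK.
  have h2 : `|c o| / Num.sqrt (b o) <= e * Num.sqrt W.
    rewrite -sq1; apply: (le_trans co); apply: (le_trans sSc).
    by rewrite mulrC ler_wpM2l.
  have h3 : b o * `|z o| / Num.sqrt (b o) = b o * Num.sqrt W.
    by rewrite sWe mulrA.
  have h4 : (b o * `|z o| - `|c o|) / Num.sqrt (b o) <= `|b o * z o + c o| / Num.sqrt (b o).
    by rewrite ler_pM2r ?invr_gt0.
  apply: (le_trans _ h4); rewrite [X in _ <= X]mulrBl h3; lra.
have sWp : 0 < Num.sqrt W by rewrite sqrtr_gt0.
have bep : 0 < b o - e by rewrite /e; lra.
have Denp : 0 < Num.sqrt ((b o * z o + c o) ^+ 2 / b o).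
  by apply: lt_le_trans Den; apply: mulr_gt0.
split.
  apply/negP => /eqP h; move: Denp; rewrite h expr0n /= mul0r sqrtr0; lra.
have Num1 : Num.sqrt (\sum_(i < d | (0 < (i : nat))%N) (b i * z i + c i) ^+ 2 / b i)
   <= (b1 + e) * Num.sqrt S.
  have -> : \sum_(i < d | (0 < (i : nat))%N) (b i * z i + c i) ^+ 2 / b i =
            \sum_(i < d | (0 < (i : nat))%N) (b i)^-1 * (b i * z i + c i) ^+ 2.
    by apply: eq_bigr => i _; rewrite mulrC.
  have mk := @mink_ineq _ _ (fun i : 'I_d => (0 < (i : nat))%N) (fun i => (b i)^-1) (fun i => b i * z i) c.
  apply: (le_trans (mk _)); first by move=> i; rewrite invr_ge0 ltW.
  have t1 : Num.sqrt (\sum_(i < d | (0 < (i : nat))%N) (b i)^-1 * (b i * z i) ^+ 2)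
       <= b1 * Num.sqrt S.
    rewrite -(ger0_norm b10) -sqrtr_sqr -sqrtrM ?sqr_ge0 // ler_sqrt; last first.
      by apply: mulr_ge0; [apply: sqr_ge0|].
    rewrite /S mulr_sumr; apply: ler_sum => i Hi.
    have bi := bp i; have bib := bb1 i Hi.
    have -> : (b i)^-1 * (b i * z i) ^+ 2 = b i ^+ 2 * (z i ^+ 2 / b i).
      by field; rewrite gt_eqF.
    apply: ler_wpM2r; first by apply: divr_ge0; [apply: sqr_ge0|apply: ltW].
    by rewrite lerXn2r // ?nnegrE ltW.
  have t2 : Num.sqrt (\sum_(i < d | (0 < (i : nat))%N) (b i)^-1 * (c i) ^+ 2)
       <= e * Num.sqrt S.
    apply: le_trans (_ : Num.sqrt Sc <= _); last first.
      by apply: (le_trans sSc); rewrite mulrC ler_wpM2l.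
    rewrite ler_sqrt; last by apply: sumr_ge0.
    apply: le_trans (sum_sub_le _ _ _ c0); apply: ler_sum => i _; rewrite mulrC //.
  rewrite mulrDl; exact: lerD.
set X := Num.sqrt (\sum_(i | _) _).
set Y := Num.sqrt ((b o * z o + c o) ^+ 2 / b o).
have X0 : 0 <= X by apply: sqrtr_ge0.
rewrite ler_pdivrMr // -/Y.
apply: (le_trans Num1).
have sS0 : 0 <= Num.sqrt S by apply: sqrtr_ge0.
have -> : 5 / 7 * (Num.sqrt S / Num.sqrt W) * Y = (5 / 7 * Num.sqrt S) * (Y / Num.sqrt W).
  by field; rewrite gt_eqF.
have YW : b o - e <= Y / Num.sqrt W by rewrite ler_pdivlMr.
have k : b1 + e <= 5 / 7 * (b o - e) by rewrite /e; lra.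
nra.
Qed.

End H2.

Section LA.
Context {R : realType}.

Lemma vdotE {n} (u v : 'cV[R]_n) : vdot u v = \sum_k u k 0 * v k 0.
Proof. by rewrite /vdot mxE; apply: eq_bigr => k _; rewrite mxE. Qed.

Lemma vdotC {n} (u v : 'cV[R]_n) : vdot u v = vdot v u.
Proof. by rewrite !vdotE; apply: eq_bigr => k _; rewrite mulrC. Qed.

Lemma vdot_ge0 {n} (u : 'cV[R]_n) : 0 <= vdot u u.
Proof. by rewrite vdotE; apply: sumr_ge0 => k _; rewrite -expr2 sqr_ge0. Qed.

Lemma vdot_gt0 {n} (u : 'cV[R]_n) : u != 0 -> 0 < vdot u u.
Proof.
move=> u0; rewrite lt_def vdot_ge0 andbT; apply/negP => /eqP h.
move/negP: u0; apply; apply/eqP/matrixP => i j; rewrite (ord1 j) mxE.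
move: h; rewrite vdotE => h.
have H := @psumr_eq0P _ _ predT (fun k => u k 0 * u k 0).
have := H (fun k _ => (eq_ind _ (fun x => 0 <= x) (sqr_ge0 (u k 0)) _ (expr2 _))) h i isT.
by move/eqP; rewrite mulf_eq0 orbb => /eqP.
Qed.


Lemma orthoC {n} (P : 'M[R]_n) : orthogonalmx P -> P *m P^T = 1%:M.
Proof. by move=> h; apply: mulmx1C. Qed.

Lemma vdot_col {n} (v : 'cV[R]_n) (P : 'M[R]_n) j :
  vdot v (col j P) = \sum_k v k 0 * P k j.
Proof. by rewrite vdotE; apply: eq_bigr => k _; rewrite mxE. Qed.

Lemma spectral_quad {n} (P X : 'M[R]_n) (g : 'I_n -> R) :
  orthogonalmx P -> (forall i, X *m col i P = g i *: col i P) ->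
  forall v : 'cV_n, (v^T *m X *m v) 0 0 = \sum_i g i * vdot v (col i P) ^+ 2.
Proof.
move=> oP H v.
have XP : X *m P = P *m diag_mx (\row_i g i).
  apply/matrixP => i j; rewrite mul_mx_diag !mxE.
  move: (H j) => /matrixP /(_ i 0); rewrite !mxE mulrC => <-.
  by apply: eq_bigr => k _; rewrite !mxE.
have -> : v^T *m X *m v = v^T *m P *m diag_mx (\row_i g i) *m (P^T *m v).
  by rewrite -(mulmxA _ P) -XP !mulmxA -(mulmxA _ P) orthoC // mulmx1.
rewrite mxE; apply: eq_bigr => j _.
rewrite mul_mx_diag vdot_col.
have -> : (P^T *m v) j 0 = \sum_k v k 0 * P k j.
  by rewrite mxE; apply: eq_bigr => k _; rewrite mxE mulrC.
rewrite mxE.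
have -> : (v^T *m P) 0 j = \sum_k v k 0 * P k j.
  by rewrite mxE; apply: eq_bigr => k _; rewrite mxE.
rewrite mxE.
ring.
Qed.

Lemma norm_expand {n} (P : 'M[R]_n) : orthogonalmx P ->
  forall v : 'cV_n, vdot v v = \sum_i vdot v (col i P) ^+ 2.
Proof.
move=> oP v.
have := @spectral_quad _ P 1%:M (fun _ => 1) oP _ v.
rewrite mulmx1 /vdot => ->; first by apply: eq_bigr => i _; rewrite mul1r.
by move=> i; rewrite mul1mx scale1r.
Qed.


Lemma cnt_le1 (i : nat) k : \sum_(j < k) (if i == (j : nat) then 1 else 0 : R) <= 1.
Proof.
have : \sum_(j < k) (if i == (j : nat) then 1 else 0 : R) = (i < k)%N%:R.
  elim: k => [|k IH]; first by rewrite big_ord0.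
  rewrite big_ord_recr /= IH ltnS.
  by case: ltngtP => _ /=; rewrite ?addr0 ?add0r.
by move=> ->; case: (i < k)%N.
Qed.

Lemma quadC {m k} (T : 'M[R]_(m, k)) (a : 'cV_m) (b : 'cV_k) :
  ((col_mx a b)^T *m block_mx 0 T T^T 0 *m col_mx a b) 0 0 = 2 * (a^T *m T *m b) 0 0.
Proof.
rewrite tr_col_mx mul_row_block !mulmx0 ?addr0 ?add0r mul_row_col.
have -> : b^T *m T^T *m a = (a^T *m T *m b)^T by rewrite !trmx_mul trmxK mulmxA.
set Z := a^T *m T *m b.
have -> : (Z^T + Z) 0 0 = Z^T 0 0 + Z 0 0 by rewrite mxE.
rewrite [Z^T 0 0]mxE; lra.
Qed.

Lemma rdiag_bound {m k} (a : 'cV[R]_m) (b : 'cV[R]_k) (s : nat -> R) (K : R) :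
  0 <= K ->
  (forall (i : 'I_m) (j : 'I_k), (i : nat) = j ->
     2 * (a i 0 * s i * b j 0) <= K * (a i 0 ^+ 2 + b j 0 ^+ 2)) ->
  2 * (a^T *m rdiagmx m k s *m b) 0 0 <= K * (vdot a a + vdot b b).
Proof.
move=> K0 H.
pose E (i : 'I_m) (j : 'I_k) : R := if (i : nat) == j then 1 else 0.
have e1 : (a^T *m rdiagmx m k s *m b) 0 0 =
          \sum_j \sum_i a i 0 * (rdiagmx m k s) i j * b j 0.
  rewrite mxE; apply: eq_bigr => j _; rewrite mxE mulr_suml.
  by apply: eq_bigr => i _; rewrite mxE.
rewrite e1 mulr_sumr.
apply: (le_trans (y := \sum_j \sum_i K * (E i j * a i 0 ^+ 2 + E i j * b j 0 ^+ 2))).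
  apply: ler_sum => j _; rewrite mulr_sumr; apply: ler_sum => i _.
  rewrite /E mxE; case: eqP => h.
    by rewrite !mul1r; apply: H.
  by rewrite !(mulr0, mul0r, addr0).
under eq_bigr do rewrite -mulr_sumr.
rewrite -mulr_sumr ler_wpM2l //.
under eq_bigr do rewrite big_split /=.
rewrite big_split /=.
rewrite !vdotE; apply: lerD.
- rewrite exchange_big /=; apply: ler_sum => i _; rewrite -mulr_suml.
  rewrite -expr2 -[X in _ <= X]mul1r; apply: ler_wpM2r; first exact: sqr_ge0.
  exact: cnt_le1.
- apply: ler_sum => j _; rewrite -mulr_suml.
  rewrite -expr2 -[X in _ <= X]mul1r; apply: ler_wpM2r; first exact: sqr_ge0.
  rewrite /E; under eq_bigr do rewrite eq_sym.
  exact: cnt_le1.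
Qed.


Lemma posdef_unit {n} (S : 'M[R]_n) :
  (forall v : 'cV_n, v != 0 -> 0 < (v^T *m S *m v) 0 0) -> S \in unitmx.
Proof.
move=> H; rewrite unitmxE unitfE; apply/negP => /det0P [v v0 vS].
have : v^T != 0 by apply: contra v0 => /eqP h; rewrite -[v]trmxK h trmx0.
move/H; rewrite trmxK vS mul0mx mxE ltxx //.
Qed.

Lemma vdot_col_mx {m k} (a a' : 'cV[R]_m) (b b' : 'cV[R]_k) :
  vdot (col_mx a b) (col_mx a' b') = vdot a a' + vdot b b'.
Proof. by rewrite /vdot tr_col_mx mul_row_col mxE. Qed.

Lemma vdot_orth {m} (U : 'M[R]_m) (a : 'cV_m) :
  orthogonalmx U -> vdot (U^T *m a) (U^T *m a) = vdot a a.
Proof.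
move=> oU; rewrite /vdot trmx_mul trmxK mulmxA -(mulmxA _ U) orthoC //.
by rewrite mulmx1.
Qed.

Lemma vdotZl {n} (c : R) (u v : 'cV[R]_n) : vdot (c *: u) v = c * vdot u v.
Proof. by rewrite /vdot linearZ /= -scalemxAl mxE. Qed.

Lemma vdotDl {n} (u u' v : 'cV[R]_n) : vdot (u + u') v = vdot u v + vdot u' v.
Proof. by rewrite /vdot linearD /= mulmxDl mxE. Qed.

Lemma quad_svd {m k} (U : 'M[R]_m) (V : 'M[R]_k) (s : nat -> R) (x : 'cV_(m + k)) (K : R) :
  orthogonalmx U -> orthogonalmx V -> 0 <= K ->
  (forall (i : 'I_m) (j : 'I_k), (i : nat) = j ->
     2 * ((U^T *m usubmx x) i 0 * s i * (V^T *m dsubmx x) j 0) <=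
     K * ((U^T *m usubmx x) i 0 ^+ 2 + (V^T *m dsubmx x) j 0 ^+ 2)) ->
  (x^T *m block_mx 0 (U *m rdiagmx m k s *m V^T) (U *m rdiagmx m k s *m V^T)^T 0 *m x) 0 0
   <= K * vdot x x.
Proof.
move=> oU oV K0 H.
rewrite -[x]vsubmxK quadC vdot_col_mx -(vdot_orth U (usubmx x) oU) -(vdot_orth V (dsubmx x) oV).
apply: le_trans (rdiag_bound _ _ _ _ K0 H).
by rewrite trmx_mul trmxK !mulmxA.
Qed.


Lemma quad_diff {n} (A : 'M[R]_n) (x y : 'cV_n) : A^T = A ->
  2^-1 * (x^T *m A *m x) 0 0 - (x^T *m A *m y) 0 0
  - (2^-1 * (y^T *m A *m y) 0 0 - (y^T *m A *m y) 0 0)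
  = 2^-1 * ((x - y)^T *m A *m (x - y)) 0 0.
Proof.
move=> As.
have e : (y^T *m A *m x) 0 0 = (x^T *m A *m y) 0 0.
  have -> : y^T *m A *m x = (x^T *m A *m y)^T by rewrite !trmx_mul trmxK As mulmxA.
  by rewrite mxE.
have -> : (x - y)^T = x^T - y^T by rewrite linearB.
rewrite mulmxBl mulmxBl mulmxBr mulmxBr.
have -> : (x^T *m A *m x - x^T *m A *m y - (y^T *m A *m x - y^T *m A *m y)) 0 0 =
  (x^T *m A *m x) 0 0 - (x^T *m A *m y) 0 0 - ((y^T *m A *m x) 0 0 - (y^T *m A *m y) 0 0).
  by rewrite !mxE.
rewrite e.
set a := (x^T *m A *m x) 0 0; set b := (x^T *m A *m y) 0 0; set c := (y^T *m A *m y) 0 0.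
lra.
Qed.

Lemma min_div (x y n : R) : 0 < n -> Num.min (x / n) (y / n) = Num.min x y / n.
Proof.
move=> n0; by rewrite minr_pMl // invr_ge0 ltW.
Qed.

Lemma sum_xi {n} (P : 'M[R]_n) (beta : nat -> R) (r : 'cV_n) (Pr : pred 'I_n) :
  0 < vdot r r ->
  \sum_(i < n | Pr i) xi P r i ^+ 2 / beta i =
  (\sum_(i < n | Pr i) vdot r (col i P) ^+ 2 / beta i) / vdot r r.
Proof.
move=> n0; rewrite mulr_suml; apply: eq_bigr => i _.
by rewrite /xi /vnorm expr_div_n sqr_sqrtr ?ltW // mulrAC.
Qed.

Lemma Gfun_Gz {n} (P : 'M[R]_n) (beta : nat -> R) (r : 'cV_n) :
  0 < vdot r r ->
  Gfun P beta r = Gz (fun i : 'I_n => beta i) (fun i => vdot r (col i P)).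
Proof.
move=> n0; rewrite /Gfun /Gz !sum_xi //.
rewrite ![_ / vdot r r]mulrC !sqrtrM ?invr_ge0 ?ltW //.
set a := Num.sqrt (vdot r r)^-1.
have a0 : a != 0 by rewrite /a sqrtr_eq0 -ltNge invr_gt0.
by rewrite invfM mulrACA mulfV // mul1r.
Qed.

End LA.


Theorem lemma5 (R : realType) (N dx dy : nat)
  (x : 'I_N -> 'cV[R]_dx.+1) (y : 'I_N -> 'cV[R]_dy.+1)
  (* Sx = Sigma_xx^{1/2}, Sy = Sigma_yy^{1/2} *)
  (Sx : 'M[R]_dx.+1) (Sy : 'M[R]_dy.+1)
  (U : 'M[R]_dx.+1) (V : 'M[R]_dy.+1) (rho : nat -> R)
  (lambda l u eta : R)
  (P : 'M[R]_(dx.+1 + dy.+1)) (beta : nat -> R)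
  (w : nat -> 'cV[R]_(dx.+1 + dy.+1)) :
  let Sxx := covmx x x in
  let Syy := covmx y y in
  let Sxy := covmx x y in
  posdef Sxx -> posdef Syy ->
  is_sqrtmx Sxx Sx -> is_sqrtmx Syy Sy ->
  let T := invmx Sx *m Sxy *m invmx Sy in
  is_svd T U V rho ->
  let Delta := rho 0%N - rho 1%N in
  0 < Delta ->
  let a1 := col 0 U in
  let b1 := col 0 V in
  let uh := invmx Sx *m a1 in
  let vh := invmx Sy *m b1 in
  0 < l -> l < u -> u < 1 ->
  l * Delta <= lambda - rho 0%N <= u * Delta ->
  let C := block_mx 0 T T^T 0 in
  let M := invmx (lambda%:M - C) in
  let A := block_mx (lambda *: Sxx) (- Sxy) (- Sxy^T) (lambda *: Syy) in
  let B := block_mx Sxx 0 0 Syy in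
  let Bh := block_mx Sx 0 0 Sy in
  let rh := (Num.sqrt 2)^-1 *: col_mx (Sx *m uh) (Sy *m vh) in
  (* beta_1 >= ... >= beta_d > 0 eigenvalues of M, orthonormal eigenvectors
     p_i = col i P, with p_1 = rh *)
  orthogonalmx P ->
  (forall i : 'I_(dx.+1 + dy.+1), M *m col i P = beta i *: col i P) ->
  (forall i j : 'I_(dx.+1 + dy.+1), (i <= j)%N -> beta j <= beta i) ->
  (forall i : 'I_(dx.+1 + dy.+1), 0 < beta i) ->
  col 0 P = rh ->
  0 < eta < 1 ->
  let r := fun t => Bh *m w t in
  xi P (r 0%N) 0 != 0 ->
  (forall t : nat,
     let f := lsq A B (w t) in
     let fstar := f (invmx A *m B *m w t) in
     let eps := (f (w t.+1) - fstar) / ((w t)^T *m B *m w t) 0 0 in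
     eps <= Num.min
              (\sum_(i < dx.+1 + dy.+1 | (0 < (i : nat))%N)
                  xi P (r t) i ^+ 2 / beta i)
              (xi P (r t) 0 ^+ 2 / beta 0%N)
            * ((beta 0%N - beta 1%N) ^+ 2 / 32)) ->
  let Tn := Num.ceil (ln (Gfun P beta (r 0%N) / eta) / ln (7 / 5 : R)) in
  forall t : nat, Tn <= t%:Z ->
    `|sin (angle (r t) rh)| <= Gfun P beta (r t) /\ Gfun P beta (r t) <= eta.
Proof.
move=> Sxx Syy Sxy pSxx pSyy [pSx Sx2] [pSy Sy2] T [oU [oV [Tdef [rs [r0 _]]]]].
move=> Delta HD a1 b1 uh vh l0 lu u1 /andP[Hl Hu] C M A B Bh rh oP HM Hbs Hbp HP0.
move=> /andP[eta0 eta1] r Hxi0 Heps Tn.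
set d := (dx.+1 + dy.+1)%N.
set D := rdiagmx dx.+1 dy.+1 rho.
have [Sxs _] := pSx; have [Sys _] := pSy.
have uSx : Sx \in unitmx by apply: posdef_unit; case: pSx.
have uSy : Sy \in unitmx by apply: posdef_unit; case: pSy.
set Q : 'M[R]_d := lambda%:M - C.
have lr0 : 0 < lambda - rho 0%N by move: Hl; rewrite -/Delta; nra.
have Cs : C^T = C by rewrite /C tr_block_mx !trmx0 trmxK.
have Qs : Q^T = Q by rewrite /Q linearB /= tr_scalar_mx Cs.
have quadQ : forall xx : 'cV_d, (xx^T *m Q *m xx) 0 0 = lambda * vdot xx xx - (xx^T *m C *m xx) 0 0.
  move=> xx; rewrite /Q mulmxBr mulmxBl mul_mx_scalar -scalemxAl !mxE.
  by rewrite /vdot mxE.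
have CT : C = block_mx 0 (U *m D *m V^T) (U *m D *m V^T)^T 0 by rewrite /C Tdef.
have quadC0 : forall xx : 'cV_d, (xx^T *m C *m xx) 0 0 <= rho 0%N * vdot xx xx.
  move=> xx; rewrite CT; apply: quad_svd => //.
  move=> i j _; set p := (U^T *m _) i 0; set q := (V^T *m _) j 0.
  have h1 : 0 <= rho i * (p - q) ^+ 2 by apply: mulr_ge0 => //; apply: sqr_ge0.
  have h2 : 0 <= (rho 0%N - rho i) * (p ^+ 2 + q ^+ 2).
    apply: mulr_ge0; first by rewrite subr_ge0; apply: rs.
    by apply: addr_ge0; apply: sqr_ge0.
  have e : rho 0%N * (p ^+ 2 + q ^+ 2) - 2 * (p * rho i * q) =
     rho i * (p - q) ^+ 2 + (rho 0%N - rho i) * (p ^+ 2 + q ^+ 2) by ring.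
  lra.
have uQ : Q \in unitmx.
  apply: posdef_unit => v v0; rewrite quadQ.
  have := quadC0 v; have := vdot_gt0 v v0; nra.
have oP' : P^T *m P = 1%:M := oP.
have oU' : U^T *m U = 1%:M := oU.
have oV' : V^T *m V = 1%:M := oV.
have HQ : forall i, Q *m col i P = (beta i)^-1 *: col i P.
  move=> i; have h := congr1 (mulmx Q) (HM i).
  rewrite /M mulmxA (mulmxV uQ) mul1mx -scalemxAr in h.
  rewrite [in RHS]h scalerA mulVf ?scale1r //; exact: lt0r_neq0 (Hbp i).
have pdot : forall i j, vdot (col i P) (col j P) = (i == j)%:R.
  move=> i j; have := congr1 (fun X : 'M[R]_d => X i j) oP'; rewrite /= !mxE => <-.
  by rewrite vdot_col; apply: eq_bigr => k _; rewrite !mxE.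
have quadQp : forall i, ((col i P)^T *m Q *m col i P) 0 0 = (beta i)^-1.
  move=> i; rewrite -mulmxA HQ -scalemxAr mxE.
  by rewrite -/(vdot _ _) pdot eqxx mulr1.
set s := (Num.sqrt 2 : R)^-1.
have s2 : s ^+ 2 = 2^-1 by rewrite /s exprVn sqr_sqrtr.
have s0 : s != 0 by rewrite /s invr_eq0 sqrtr_eq0 -ltNge.
have rhE : rh = s *: col_mx a1 b1.
  by rewrite /rh /uh /vh !mulmxA !mulmxV // !mul1mx.
have Ua1 : U^T *m a1 = delta_mx 0 0.
  by rewrite /a1 colE mulmxA oU' mul1mx.
have Vb1 : V^T *m b1 = delta_mx 0 0.
  by rewrite /b1 colE mulmxA oV' mul1mx.
have rhC : (rh^T *m C *m rh) 0 0 = rho 0%N.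
  rewrite rhE linearZ /= mxE linearZ /= -!scalemxAl mxE quadC Tdef.
  have -> : a1^T *m (U *m D *m V^T) *m b1 = (U^T *m a1)^T *m D *m (V^T *m b1).
    by rewrite trmx_mul trmxK !mulmxA.
  rewrite Ua1 Vb1 trmx_delta -rowE -colE !mxE /=.
  have -> : s * (s * (2 * rho 0%N)) = s ^+ 2 * 2 * rho 0%N by ring.
  by rewrite s2 mulVf ?mul1r.
have b0E : (beta 0%N)^-1 = lambda - rho 0%N.
  have := quadQp 0; rewrite HP0 quadQ rhC -HP0 /vdot.
  by rewrite -/(vdot _ _) pdot eqxx mulr1 => <-.
have trv : forall n (W : 'M[R]_n) (yy : 'cV_n) i, (W^T *m yy) i 0 = vdot (col i W) yy.
  by move=> n W yy i; rewrite mxE vdotE; apply: eq_bigr => k _; rewrite !mxE.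
have ne0 : forall i : 'I_d, (0 < (i : nat))%N -> (i == 0) = false.
  by move=> i hi; apply/negbTE; rewrite -val_eqE /= -lt0n.
have hbi : forall i : 'I_d, (0 < (i : nat))%N -> lambda - rho 1%N <= (beta i)^-1.
  move=> i hi; have := quadQp i; rewrite quadQ pdot eqxx mulr1 => <-.
  set p := col i P.
  have orth : vdot a1 (usubmx p) + vdot b1 (dsubmx p) = 0.
    have h : vdot p rh = 0 by rewrite -HP0 pdot ne0.
    rewrite vdotC rhE vdotZl in h.
    have : vdot (col_mx a1 b1) p = 0.
      by apply/eqP; move/eqP: h; rewrite mulf_eq0 (negbTE s0).
    have e := vdot_col_mx a1 (usubmx p) b1 (dsubmx p).
    by rewrite vsubmxK in e; rewrite -e.
  suff : (p^T *m C *m p) 0 0 <= rho 1%N * vdot p p.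
    by rewrite /p pdot eqxx mulr1; lra.
  rewrite CT; apply: quad_svd => //.
  move=> i' j' hij; rewrite !trv.
  set aa := vdot (col i' U) _; set bb := vdot (col j' V) _.
  have rs1 := r0 1%N; have rsi := r0 i'.
  case: (posnP (i' : nat)) => hi'.
  - have ei : i' = 0 by apply: val_inj.
    have ej : j' = 0 by apply: val_inj; rewrite /= -hij.
    have eb : bb = - aa by rewrite /bb /aa ei ej -/a1 -/b1; lra.
    rewrite eb; have h1 : 0 <= rho i' * aa ^+ 2 by apply: mulr_ge0 => //; apply: sqr_ge0.
    have h2 : 0 <= rho 1%N * (aa ^+ 2 + (- aa) ^+ 2).
      by apply: mulr_ge0 => //; apply: addr_ge0; apply: sqr_ge0.
    have e : 2 * (aa * rho i' * - aa) = - 2 * (rho i' * aa ^+ 2) by ring.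
    lra.
  - have h1 : 0 <= rho i' * (aa - bb) ^+ 2 by apply: mulr_ge0 => //; apply: sqr_ge0.
    have h2 : 0 <= (rho 1%N - rho i') * (aa ^+ 2 + bb ^+ 2).
      apply: mulr_ge0; first by rewrite subr_ge0; apply: rs.
      by apply: addr_ge0; apply: sqr_ge0.
    have e : rho 1%N * (aa ^+ 2 + bb ^+ 2) - 2 * (aa * rho i' * bb) =
       rho i' * (aa - bb) ^+ 2 + (rho 1%N - rho i') * (aa ^+ 2 + bb ^+ 2) by ring.
    lra.
have d1 : (1 < d)%N by rewrite /d addnS ltnS addSn.
pose i1 : 'I_d := Ordinal d1.
have b1p : 0 < beta 1%N := Hbp i1.
have bo1 : forall i : 'I_d, (0 < (i : nat))%N -> beta i <= beta 1%N.
  by move=> i hi; apply: (Hbs i1 i).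
have b0E' : beta 0%N = (lambda - rho 0%N)^-1 by rewrite -b0E invrK.
have hb1 : 2 * beta 1%N <= beta 0%N.
  rewrite b0E' -div1r ler_pdivlMr //.
  have h := hbi i1 isT; rewrite /= in h.
  have h' : (lambda - rho 1%N) * beta 1%N <= 1.
    by rewrite -(mulVf (lt0r_neq0 b1p)) ler_pM2r.
  have hx : 2 * (lambda - rho 0%N) <= lambda - rho 1%N.
    move: Hu; rewrite /Delta; nra.
  nra.
have Bhs : Bh^T = Bh by rewrite /Bh tr_block_mx !trmx0 Sxs Sys.
have BB : B = Bh *m Bh.
  by rewrite /Bh /B mulmx_block !mulmx0 !mul0mx !addr0 !add0r Sx2 Sy2.
have QB : Q = block_mx (lambda%:M) (- T) (- T^T) (lambda%:M).
  rewrite /Q /C (scalar_mx_block dx.+1 dy.+1) opp_block_mx add_block_mx.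
  by rewrite !oppr0 ?subr0 ?addr0 ?add0r.
have STS : Sx *m T *m Sy = Sxy.
  by rewrite /T !mulmxA mulmxV // mul1mx -mulmxA mulVmx // mulmx1.
have AE : A = Bh *m Q *m Bh.
  rewrite QB /Bh !mulmx_block !mulmx0 !mul0mx !addr0 !add0r.
  rewrite !mul_mx_scalar -!scalemxAl Sx2 Sy2 !mulmxN !mulNmx STS.
  have -> : Sy *m T^T *m Sx = Sxy^T by rewrite -STS !trmx_mul Sxs Sys !mulmxA.
  by [].
pose iBh := block_mx (invmx Sx) 0 0 (invmx Sy).
have BhiBh : Bh *m iBh = 1%:M.
  rewrite /Bh /iBh mulmx_block !mulmx0 !mul0mx !addr0 !add0r !mulmxV //.
  by rewrite -scalar_mx_block.
have uBh : Bh \in unitmx by case: (mulmx1_unit BhiBh).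
have uA : A \in unitmx by rewrite AE !unitmx_mul uBh uQ.
have MBh : Bh *m invmx A *m Bh = M.
  set X := Bh *m invmx A *m Bh.
  have XQ : X *m Q = 1%:M.
    have -> : Q = invmx Bh *m A *m invmx Bh.
      by rewrite AE !mulmxA mulVmx // mul1mx -mulmxA mulmxV // mulmx1.
    rewrite /X !mulmxA -(mulmxA _ Bh) mulmxV // mulmx1 -(mulmxA _ (invmx A)) mulVmx //.
    by rewrite mulmx1 mulmxV.
  rewrite /M -[invmx Q]mul1mx -XQ -mulmxA mulmxV // mulmx1 //.
have Ms : M^T = M by rewrite /M trmx_inv Qs.
have As : A^T = A by rewrite AE !trmx_mul Bhs Qs mulmxA.
pose z t : 'I_d -> R := fun i => vdot (r t) (col i P).
pose bb : 'I_d -> R := fun i => beta i.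
have Hbp' : forall i, 0 < bb i := fun i => Hbp i.
have nrm : forall t, vdot (r t) (r t) = \sum_i z t i ^+ 2 := fun t => norm_expand P oP (r t).
have npos : forall t, z t 0 != 0 -> 0 < vdot (r t) (r t).
  move=> t zt0; rewrite nrm (sum_split0 _ 0) //.
  apply: (lt_le_trans (y := z t 0 ^+ 2)); first by rewrite exprn_even_gt0.
  by rewrite lerDl; apply: sumr_ge0 => i _; apply: sqr_ge0.
have step : forall t, z t 0 != 0 -> z t.+1 0 != 0 /\ Gz bb (z t.+1) <= 5 / 7 * Gz bb (z t).
  move=> t zt0.
  have n0 := npos t zt0.
  set n := vdot (r t) (r t) in n0.
  set ws := invmx A *m B *m w t.
  set del := r t.+1 - M *m r t.
  have Bws : Bh *m ws = M *m r t by rewrite /ws BB -MBh /r !mulmxA.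
  have delE : del = Bh *m (w t.+1 - ws) by rewrite mulmxBr Bws.
  have zrel : forall i, z t.+1 i = bb i * z t i + vdot del (col i P).
    move=> i; rewrite /z.
    have -> : r t.+1 = M *m r t + del by rewrite /del addrC subrK.
    rewrite vdotDl; congr (_ + _).
    by rewrite /vdot trmx_mul Ms -mulmxA HM -scalemxAr mxE.
  have quadDel : ((w t.+1 - ws)^T *m A *m (w t.+1 - ws)) 0 0 =
                 \sum_i vdot del (col i P) ^+ 2 / bb i.
    rewrite AE.
    have -> : (w t.+1 - ws)^T *m (Bh *m Q *m Bh) *m (w t.+1 - ws) =
              (Bh *m (w t.+1 - ws))^T *m Q *m (Bh *m (w t.+1 - ws)).
      by rewrite trmx_mul Bhs !mulmxA.
    rewrite -delE (spectral_quad _ _ (fun i : 'I_d => (beta i)^-1) oP HQ del).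
    by apply: eq_bigr => i _; rewrite mulrC.
  have Aws : A *m ws = B *m w t by rewrite /ws !mulmxA mulmxV // mul1mx.
  have lsqE : forall x0, lsq A B (w t) x0 =
      2^-1 * (x0^T *m A *m x0) 0 0 - (x0^T *m A *m ws) 0 0.
    by move=> x0; rewrite /lsq; congr (_ - _); rewrite -mulmxA -Aws mulmxA.
  have fdiff : lsq A B (w t) (w t.+1) - lsq A B (w t) ws =
      2^-1 * ((w t.+1 - ws)^T *m A *m (w t.+1 - ws)) 0 0.
    by rewrite !lsqE quad_diff.
  have wBw : ((w t)^T *m B *m w t) 0 0 = n.
    by rewrite BB /n /vdot /r trmx_mul Bhs !mulmxA.
  have He := Heps t; cbv zeta in He.
  rewrite -/ws fdiff wBw (sum_xi _ _ _ _ n0) in He.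
  have x0 : xi P (r t) 0 ^+ 2 / beta 0%N = (z t 0 ^+ 2 / bb 0) / n.
    by rewrite /xi /vnorm expr_div_n sqr_sqrtr ?ltW // mulrAC.
  rewrite x0 -/n min_div // [in X in _ <= X]mulrAC ler_pM2r ?invr_gt0 // quadDel in He.
  have Hsum : \sum_i vdot del (col i P) ^+ 2 / bb i <=
     2 * (Num.min (\sum_(i < dx.+1 + dy.+1 | (0 < (i : nat))%N)
        vdot (r t) (col i P) ^+ 2 / beta i) (z t 0 ^+ 2 / bb 0)
        * ((beta 0%N - beta 1%N) ^+ 2 / 32)).
    move: He; lra.
  have := @core R d 0 bb (beta 1%N) (z t) (fun i => vdot del (col i P)) erefl
     Hbp' bo1 (ltW b1p) hb1 zt0 Hsum.
  have -> : (fun i => bb i * z t i + vdot del (col i P)) = z t.+1.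
    by apply: funext => i; rewrite zrel.
  by rewrite -zrel.
have zz0 : z 0%N 0 != 0.
  apply: contra Hxi0 => /eqP h; apply/eqP.
  by rewrite /xi; move: h; rewrite /z => ->; rewrite mul0r.
have ind : forall t, z t 0 != 0 /\ Gz bb (z t) <= (5 / 7) ^+ t * Gz bb (z 0%N).
  elim => [|t [h1 h2]]; first by rewrite expr0 mul1r.
  have [h3 h4] := step t h1; split => //.
  apply: (le_trans h4).
  have -> : (5 / 7 : R) ^+ t.+1 * Gz bb (z 0%N) = 5 / 7 * ((5 / 7) ^+ t * Gz bb (z 0%N)).
    by rewrite exprS mulrA.
  by rewrite ler_wpM2l //.
have Gz0 : forall t, 0 <= Gz bb (z t).
  by move=> t; rewrite /Gz; apply: divr_ge0; apply: sqrtr_ge0.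
move=> t Ht; have [zt Gt] := ind t.
have Ge : Gfun P beta (r t) = Gz bb (z t) := Gfun_Gz P beta (r t) (npos t zt).
have G0e : Gfun P beta (r 0%N) = Gz bb (z 0%N) := Gfun_Gz P beta (r 0%N) (npos 0%N zz0).
rewrite Ge; split.
- have nt := npos t zt; set n := vdot (r t) (r t) in nt.
  have vrh : vnorm rh = 1 by rewrite /vnorm -HP0 pdot eqxx sqrtr1.
  have rr : vdot (r t) rh = z t 0 by rewrite -HP0.
  rewrite /angle vrh mulr1 rr.
  set x0 := z t 0 / vnorm (r t).
  set Sp := \sum_(i < d | (0 < (i : nat))%N) z t i ^+ 2.
  have nE : n = z t 0 ^+ 2 + Sp by rewrite /n nrm (sum_split0 _ 0).
  have Sp0 : 0 <= Sp by apply: sumr_ge0 => i _; apply: sqr_ge0.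
  have x2 : x0 ^+ 2 = z t 0 ^+ 2 / n by rewrite /x0 /vnorm expr_div_n sqr_sqrtr ?ltW.
  have q1 : z t 0 ^+ 2 / n <= 1 by rewrite ler_pdivrMr // mul1r nE lerDl.
  have q0 : 0 <= z t 0 ^+ 2 / n by apply: divr_ge0; [apply: sqr_ge0|apply: ltW].
  have x01 : -1 <= x0 <= 1 by apply/andP; split; nra.
  rewrite sin_acos // ger0_norm ?sqrtr_ge0 //.
  have e1 : 1 - x0 ^+ 2 = Sp / n by rewrite x2 nE; field; rewrite -nE gt_eqF.
  rewrite e1 /Gz (sum_eq0 _ 0) //.
  have W0 : 0 < z t 0 ^+ 2 / bb 0 by apply: divr_gt0; [rewrite exprn_even_gt0|].
  rewrite ler_pdivlMr ?sqrtr_gt0 //.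
  rewrite -(sqrtrM (z t 0 ^+ 2 / bb 0) (divr_ge0 Sp0 (ltW nt))) ler_sqrt; last first.
    by apply: sumr_ge0 => i _; apply: divr_ge0; [apply: sqr_ge0|apply: ltW].
  rewrite /Sp mulr_suml mulr_suml; apply: ler_sum => i hi.
  have -> : z t i ^+ 2 / n * (z t 0 ^+ 2 / bb 0) = z t i ^+ 2 * (z t 0 ^+ 2 / n / bb 0).
    by ring.
  apply: ler_wpM2l; first exact: sqr_ge0.
  have bi := Hbp' i; have b0 := Hbp' 0.
  have bi0 : bb i <= bb 0 by apply: (Hbs 0 i).
  apply: (le_trans (y := (bb 0)^-1)).
    by rewrite -[X in _ <= X]mul1r ler_wpM2r // invr_ge0 ltW.
  by rewrite lef_pV2 ?posrE.
- apply: (le_trans Gt).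
  have G00 := Gz0 0%N.
  have [G0z|G0p] := eqVneq (Gz bb (z 0%N)) 0.
    by rewrite G0z mulr0 ltW.
  have G0p' : 0 < Gz bb (z 0%N) by rewrite lt_def G0p G00.
  have l75 : 0 < ln (7 / 5 : R) by apply: ln_gt0; lra.
  have hT := ceil_ge (ln (Gfun P beta (r 0%N) / eta) / ln (7 / 5 : R)).
  rewrite -/Tn in hT.
  have hT2 : (Tn%:~R : R) <= t%:R by rewrite pmulrn ler_int.
  have hl : ln (Gfun P beta (r 0%N) / eta) <= ln ((7 / 5 : R) ^+ t).
    rewrite lnXn; last by lra.
    rewrite -[_ *+ t]mulr_natl; move: (le_trans hT hT2); rewrite ler_pdivrMr //.
  have pos1 : 0 < Gfun P beta (r 0%N) / eta by rewrite G0e divr_gt0.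
  have pos2 : 0 < (7 / 5 : R) ^+ t by apply: exprn_gt0; lra.
  rewrite ler_ln ?posrE // G0e ler_pdivrMr // in hl.
  have e : (5 / 7 : R) ^+ t * (7 / 5) ^+ t = 1.
    by rewrite -exprMn (_ : 5 / 7 * (7 / 5) = 1 :> R) ?expr1n //; field.
  have p57 : 0 <= (5 / 7 : R) ^+ t by apply: exprn_ge0; lra.
  have := ler_wpM2l p57 hl; rewrite (mulrA _ ((7 / 5) ^+ t)) e mul1r; lra.
Qed.
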